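(* Let $\kappa$ be a constancy measure. Then $\mathrm H^\kappa$ is an unbiased cooperative game mapping satisfying (Bound$_{CG}$), (Dic$_{CG}$), (Dum$_{CG}$) and (Type$_{CG}$). Moreover, for $\kappa=\kappa_{\mathrm{quad}}$, $\mathrm H^{\kappa}$ is chain-rule decomposable and satisfies (ModEC$_{CG}$).
   Context: $X$ is a fixed finite set of variables. An assignment over $U\subseteq X$ is a map $\mathbf u:U\to\{0,1\}$; for $\mathbf v$ over $V$, the cofactor is $f_{\mathbf v}(\mathbf u)=f(\mathbf v;\mathbf u_{X\setminus V})$ ($;$ concatenation, $\mathbf u_{S}$ restriction); $f_{x/c}$ for $V=\{x\}$. For $\mathbf u$ over $X$, $\mathbf u^{\oplus\{y\}}$ flips the value of $y$ and $f^{\oplus y}(\mathbf u)=f(\mathbf u^{\oplus\{y\}})$. $\mathbb B(X)$ is the set of Boolean functions $\{0,1\}^X\to\{0,1\}$, combined pointwise, $\overline f$ negation, a variable $x$ also denotes $\mathbf u\mapsto\mathbf u(x)$, $\ge$ pointwise. $\mathrm{dep}(f)=\{x:f_{x/1}\ne f_{x/0}\}$; $f$ monotone in $x$ if $f_{x/1}\ge f_{x/0}$. For a permutation $\sigma$ of $X$: $(\sigma\mathbf u)(x)=\mathbf u(\sigma^{-1}(x))$, $(\sigma f)(\mathbf u)=f(\sigma^{-1}\mathbf u)$. $f[x/s]=sf_{x/1}\lor\overline sf_{x/0}$. $\mathbb E$ is uniform expectation. Modularity: $f$ is modular in $g$ if $g$ is not constant and there are $\ell\in\mathbb B(X)$,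 $z\in X$ with $\mathrm{dep}(\ell)\cap\mathrm{dep}(g)=\emptyset$ and $f=\ell[z/g]$; monotonically modular if moreover $\ell$ is monotone in $z$. Then $f_{g/1}:=\ell_{z/1}$, $f_{g/0}:=\ell_{z/0}$, and $f[g/w]:=wf_{g/1}\lor\overline wf_{g/0}$. Cooperative games $v:2^X\to\mathbb R$, combined/compared pointwise; $\partial_xv(S)=v(S\cup\{x\})-v(S\setminus\{x\})$. A CGM is a map $f\mapsto\tau_f$ from $\mathbb B(X)$ to cooperative games. Properties, for all $x,y\in X$, permutations $\sigma$, $f,g,h$: (Bound$_{CG}$) $0\le\partial_x\tau_f\le1$; (Dum$_{CG}$) $\partial_x\tau_f=0$ if $x\notin\mathrm{dep}(f)$; (Dic$_{CG}$) $\partial_x\tau_x=\partial_x\tau_{\overline x}=1$; (Type$_{CG}$) $\tau_f(S)=\tau_{\sigma f}(\sigma(S))$ and $\tau_f(S)=\tau_{f^{\oplus y}}(S)$ for all $S$; (ModEC$_{CG}$) $\partial_x\tau_f\ge\partial_x\tau_h$ whenever $f,h$ are monotonically modular in $g$, $f_{g/1}\ge h_{g/1}$, $h_{g/0}\ge f_{g/0}$, $x\in\mathrm{dep}(g)$. $\tau$ is unbiased if $\tau_g=\tau_{\overline g}$; chain-rule decomposable if for all $f$ modular in $g$ and $x\in\mathrm{dep}(g)$: $\partial_x\tau_f=(\partial_x\tau_g)(\partial_{x_g}\tau_{f[g/x_g]})$ for a variable $x_g\notin\mathrm{dep}(f)$. A constancy measure is $\kappa:[0,1]\to[0,1]$ that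 is convex with $\kappa(0)=1$, $\kappa(a)=\kappa(1-a)$ and $\kappa(1/2)=0$; $\kappa_{\mathrm{quad}}(a)=4(a-1/2)^2$. The CGM $\mathrm H^\kappa$ is $\mathrm H^\kappa_f(S)=\mathbb E_{\mathbf a\in\{0,1\}^S}\big[\kappa(\mathbb E[f_{\mathbf a}])\big]$ (uniform over $\mathbf a$). *)

(* Defs.v *)
From mathcomp Require Import all_boot all_order all_algebra all_fingroup.
Set Implicit Arguments. Unset Strict Implicit. Unset Printing Implicit Defensive.
Import Order.TTheory GRing.Theory Num.Theory.
Local Open Scope ring_scope.

Section Defs.
Variable X : finType.

Definition asgT := {ffun X -> bool}.
Definition bfun := asgT -> bool.

(* assignments over S : encoded as total assignments that are 0 outside S
   (a bijection with {0,1}^S) *)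
Definition asg (S : {set X}) : {set asgT} :=
  [set a : asgT | [forall x, (x \notin S) ==> ~~ a x]].

Definition cofS (f : bfun) (S : {set X}) (a : asgT) : bfun :=
  fun u => f [ffun x => if x \in S then a x else u x].

Definition upd (u : asgT) (x : X) (c : bool) : asgT :=
  [ffun y => if y == x then c else u y].
Definition cof (f : bfun) (x : X) (c : bool) : bfun := fun u => f (upd u x c).

Definition varf (x : X) : bfun := fun u => u x.
Definition negf (f : bfun) : bfun := fun u => ~~ f u.

Definition dep (f : bfun) : pred X :=
  fun x => [exists u : asgT, cof f x true u != cof f x false u].

Definition monotone_in (f : bfun) (x : X) : Prop :=
  forall u, cof f x false u ==> cof f x true u.

Definition bconst (g : bfun) : Prop := exists c : bool, forall u, g u = c.

Definition bsubst (l : bfun) (z : X) (s : bfun) : bfun :=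
  fun u => (s u && cof l z true u) || (~~ s u && cof l z false u).

Definition modular_wit (f g l : bfun) (z : X) : Prop :=
  ~ bconst g /\ (forall x, ~~ (dep l x && dep g x)) /\ (forall u, f u = bsubst l z g u).

Definition mon_modular_wit (f g l : bfun) (z : X) : Prop :=
  modular_wit f g l z /\ monotone_in l z.

Definition perm_asg (s : {perm X}) (u : asgT) : asgT := [ffun x => u ((s^-1)%g x)].
Definition perm_bf (s : {perm X}) (f : bfun) : bfun := fun u => f (perm_asg (s^-1)%g u).
Definition flip (u : asgT) (y : X) : asgT :=
  [ffun x => if x == y then ~~ u x else u x].
Definition flip_bf (f : bfun) (y : X) : bfun := fun u => f (flip u y).

Variable R : realFieldType.

Definition mean (f : bfun) : R :=
  (\sum_(u : asgT) (f u)%:R) / (#|{: asgT}|)%:R.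

Definition game := {set X} -> R.
Definition deriv (x : X) (v : game) : game :=
  fun S => v (S :|: [set x]) - v (S :\ x).

Definition CGM := bfun -> game.

Definition Bound (tau : CGM) : Prop :=
  forall f x S, 0 <= deriv x (tau f) S <= 1.
Definition Dum (tau : CGM) : Prop :=
  forall f x, ~~ dep f x -> forall S, deriv x (tau f) S = 0.
Definition Dic (tau : CGM) : Prop :=
  forall x S, deriv x (tau (varf x)) S = 1 /\ deriv x (tau (negf (varf x))) S = 1.
Definition TypeCG (tau : CGM) : Prop :=
  (forall (s : {perm X}) f S, tau f S = tau (perm_bf s f) (s @: S)) /\
  (forall y f S, tau f S = tau (flip_bf f y) S).
Definition ModEC (tau : CGM) : Prop :=
  forall f h g lf zf lh zh,
    mon_modular_wit f g lf zf -> mon_modular_wit h g lh zh ->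
    (forall u, cof lh zh true u ==> cof lf zf true u) ->   (* f_{g/1} >= h_{g/1} *)
    (forall u, cof lf zf false u ==> cof lh zh false u) -> (* h_{g/0} >= f_{g/0} *)
    forall x, dep g x -> forall S, deriv x (tau h) S <= deriv x (tau f) S.
Definition unbiased (tau : CGM) : Prop := forall g S, tau g S = tau (negf g) S.
(* f[g/x_g] = x_g f_{g/1} \/ ~x_g f_{g/0} = l[z/x_g] *)
Definition chain_rule (tau : CGM) : Prop :=
  forall f g l z, modular_wit f g l z ->
  forall x, dep g x -> forall xg, ~~ dep f xg -> forall S,
    deriv x (tau f) S =
    deriv x (tau g) S * deriv xg (tau (bsubst l z (varf xg))) S.

Definition in01 (a : R) := (0 <= a <= 1).
Definition constancy (k : R -> R) : Prop :=
  (forall a, in01 a -> in01 (k a)) /\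
  (forall a b t, in01 a -> in01 b -> in01 t ->
     k (t * a + (1 - t) * b) <= t * k a + (1 - t) * k b) /\
  k 0 = 1 /\ (forall a, in01 a -> k a = k (1 - a)) /\ k (1 / 2) = 0.
Definition kquad (a : R) : R := 4 * (a - 1 / 2) ^+ 2.

Definition Hk (k : R -> R) : CGM := fun f S =>
  (\sum_(a in asg S) k (mean (cofS f S a))) / (#|asg S|)%:R.

End Defs.

(* Main.v *)
Require Import Defs.
From mathcomp Require Import all_boot all_order all_algebra all_fingroup.
From mathcomp Require Import ring lra.
Set Implicit Arguments. Unset Strict Implicit. Unset Printing Implicit Defensive.
Import Order.TTheory GRing.Theory Num.Theory.
Local Open Scope ring_scope.

Section Work.
Variable X : finType.
Variable R : realFieldType.
Local Notation asgT := (asgT X).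
Local Notation bfun := (bfun X).

Definition NN : nat := #|{: asgT}|.
Definition EE (F : asgT -> R) : R := (\sum_(u : asgT) F u) / (NN)%:R.

Lemma NN_gt0 : (0 < NN)%N.
Proof. by apply/card_gt0P; exists [ffun => false]. Qed.

Lemma NN_neq0 : (NN%:R : R) != 0.
Proof. by rewrite pnatr_eq0 -lt0n NN_gt0. Qed.

Lemma EE_ext F G : (forall u, F u = G u) -> EE F = EE G.
Proof. by move=> h; rewrite /EE; congr (_ / _); apply: eq_bigr. Qed.

Lemma EE_cst c : EE (fun _ => c) = c.
Proof.
rewrite /EE sumr_const.
have -> : #|[pred _ : asgT | true]| = NN by apply: eq_card.
by rewrite -[c *+ _]mulr_natr mulfK // NN_neq0.
Qed.

Lemma EE_le F G : (forall u, F u <= G u) -> EE F <= EE G.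
Proof.
move=> h; rewrite /EE ler_wpM2r ?invr_ge0 ?ler0n //.
by apply: ler_sum => u _; apply: h.
Qed.

Lemma EE_add F G : EE (fun u => F u + G u) = EE F + EE G.
Proof. by rewrite /EE big_split /= mulrDl. Qed.

Lemma EE_sub F G : EE (fun u => F u - G u) = EE F - EE G.
Proof. by rewrite /EE sumrB mulrBl. Qed.

Lemma EE_scal c F : EE (fun u => c * F u) = c * EE F.
Proof. by rewrite /EE -mulr_sumr mulrA. Qed.

Lemma EE_scalr c F : EE (fun u => F u * c) = EE F * c.
Proof. by rewrite mulrC -EE_scal; apply: EE_ext => u; rewrite mulrC. Qed.

Lemma EE_inj (h : asgT -> asgT) F : injective h -> EE (fun u => F (h u)) = EE F.
Proof. by move=> hi; rewrite /EE [in RHS](reindex_inj hi). Qed.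

Lemma EE_01 F : (forall u, 0 <= F u <= 1) -> 0 <= EE F <= 1.
Proof.
move=> h; apply/andP; split.
  rewrite -[X in X <= _](EE_cst 0); apply: EE_le => u.
  by case/andP: (h u).
rewrite -[X in _ <= X](EE_cst 1); apply: EE_le => u.
by case/andP: (h u).
Qed.

Lemma upd_id (u : asgT) x : upd u x (u x) = u.
Proof. by apply/ffunP => y; rewrite ffunE; case: eqP => // ->. Qed.

Lemma upd_at (u : asgT) x c : upd u x c x = c.
Proof. by rewrite ffunE eqxx. Qed.

Lemma upd_upd (u : asgT) x c c' : upd (upd u x c) x c' = upd u x c'.
Proof. by apply/ffunP => y; rewrite !ffunE; case: eqP. Qed.

Lemma upd_comm (u : asgT) x y c c' : x != y ->
  upd (upd u x c) y c' = upd (upd u y c') x c.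
Proof.
move=> nxy; apply/ffunP => w; rewrite !ffunE.
case: (eqVneq w y) => [->|wy].
  by rewrite eq_sym (negbTE nxy).
by case: (eqVneq w x).
Qed.

Lemma flipK x : involutive (fun u : asgT => flip u x).
Proof.
by move=> u; apply/ffunP => y; rewrite !ffunE; case: eqP => // ->; rewrite negbK.
Qed.

Lemma flip_inj x : injective (fun u : asgT => flip u x).
Proof. exact: inv_inj (flipK x). Qed.

Lemma EE_upd (H : asgT -> R) x :
  EE H = (EE (fun u => H (upd u x true)) + EE (fun u => H (upd u x false))) / 2.
Proof.
have pw u : H (upd u x true) + H (upd u x false) = H u + H (flip u x).
  have ef c : u x = c -> upd u x (~~ c) = flip u x.
    move=> e; apply/ffunP => y; rewrite !ffunE; case: eqP => // ->.
    by rewrite e.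
  have U c : u x = c -> upd u x c = u by move=> <-; exact: upd_id.
  case e: (u x).
  - by rewrite (U _ e) (ef true e).
  - by rewrite (U _ e) (ef false e) addrC.
rewrite -EE_add (EE_ext pw) EE_add (EE_inj H (@flip_inj x)).
have h2 : (2 : R) != 0 by rewrite pnatr_eq0.
by rewrite -mulr2n -[_ *+ 2]mulr_natr mulfK.
Qed.

Definition merge (S : {set X}) (u w : asgT) : asgT :=
  [ffun x => if x \in S then u x else w x].

Lemma mergeK S : involutive (fun p : asgT * asgT => (merge S p.1 p.2, merge S p.2 p.1)).
Proof.
case=> a b /=; congr (_, _); apply/ffunP => y; rewrite !ffunE; by case: (y \in S).
Qed.

Lemma sum_merge S (H : asgT -> R) :
  \sum_(w : asgT) \sum_(w' : asgT) H (merge S w w') = (\sum_(v : asgT) H v) *+ NN.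
Proof.
rewrite pair_bigA /=.
rewrite (reindex_inj (inv_inj (mergeK S))) /=.
have e p : merge S (merge S p.1 p.2) (merge S p.2 p.1) = p.1.
  by apply/ffunP => y; rewrite !ffunE; case: (y \in S).
under eq_bigr => p _ do rewrite e.
rewrite -(pair_bigA _ (fun a (_ : asgT) => H a)) /= -sumrMnl.
apply: eq_bigr => a _; rewrite sumr_const.
by have -> : #|[pred _ : asgT | true]| = NN by apply: eq_card.
Qed.

Lemma EE_indep (D : {set X}) (G L : asgT -> R) :
  (forall w w' : asgT, (forall x, x \in D -> w x = w' x) -> G w = G w') ->
  (forall w w' : asgT, (forall x, x \notin D -> w x = w' x) -> L w = L w') ->
  EE (fun u => G u * L u) = EE G * EE L.
Proof.
move=> hG hL.
rewrite /EE mulrACA -invfM [in RHS]mulr_suml.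
have -> : \sum_(i : asgT) G i * (\sum_(u : asgT) L u) =
    \sum_(w : asgT) \sum_(w' : asgT) G (merge D w w') * L (merge D w w').
  apply: eq_bigr => w _; rewrite mulr_sumr; apply: eq_bigr => w' _.
  congr (_ * _).
    by apply: hG => x xD; rewrite ffunE xD.
  by apply: hL => x xD; rewrite ffunE (negbTE xD).
rewrite (sum_merge D (fun v => G v * L v)).
move: (\sum_v _) => a.
have -> : a *+ NN = a * NN%:R by rewrite mulr_natr.
by rewrite invfM mulrA mulfK // NN_neq0.
Qed.


Lemma nodep_upd (g : bfun) x : ~~ dep g x -> forall w c, g (upd w x c) = g w.
Proof.
move=> nd.
have H w : g (upd w x true) = g (upd w x false).
  by move: nd; rewrite /dep negb_exists => /forallP /(_ w); rewrite negbK => /eqP.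
move=> w c; transitivity (g (upd w x (w x))); last by rewrite upd_id.
by case: c; case: (w x); rewrite ?H.
Qed.

Lemma dep_only (g : bfun) (v v' : asgT) :
  (forall x, dep g x -> v x = v' x) -> g v = g v'.
Proof.
move: {2}#|[set x | v x != v' x]|.+1 (ltnSn #|[set x | v x != v' x]|) => n.
elim: n v => [|n IH] v lt h //.
case: (set_0Vmem [set x | v x != v' x]) => [e0 | [x xin]].
  have -> // : v = v'.
  apply/ffunP => y; apply/eqP; apply: contraT => ne.
  have: y \in (set0 : {set X}) by rewrite -e0 inE.
  by rewrite inE.
have ndx : ~~ dep g x.
  by apply/negP => dx; move: xin; rewrite inE (h x dx) eqxx.
rewrite -(nodep_upd ndx v (v' x)); apply: IH; last first.
  by move=> y dy; rewrite ffunE; case: eqP => [->|_] //; exact: h.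
have sub : [set y | upd v x (v' x) y != v' y] \subset [set x | v x != v' x] :\ x.
  apply/subsetP => y; rewrite !inE ffunE; case: (eqVneq y x) => [->|nyx]; first by rewrite eqxx.
  by move=> ->.
apply: leq_ltn_trans (subset_leq_card sub) _.
rewrite (cardsD1 x [set x | v x != v' x]) xin in lt. by [].
Qed.

Definition restr (S : {set X}) (u : asgT) : asgT := [ffun x => (x \in S) && u x].
Definition a0 : asgT := [ffun _ => false].

Lemma restr_asg S u : restr S u \in asg S.
Proof.
by rewrite inE; apply/forallP => x; apply/implyP => nx; rewrite ffunE (negbTE nx).
Qed.

Lemma restr_id S a : a \in asg S -> restr S a = a.
Proof.
rewrite inE => /forallP h; apply/ffunP => x; rewrite ffunE.
case: (boolP (x \in S)) => // nx.
by move/implyP: (h x) => /(_ nx) /negbTE ->.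
Qed.

Definition fib S a := [set u | restr S u == a].

Lemma fib_card S a : a \in asg S -> #|fib S a| = #|fib S a0|.
Proof.
move=> aS.
pose sig := fun u : asgT => [ffun x => a x (+) u x].
have sigK : involutive sig.
  by move=> u; apply/ffunP => x; rewrite !ffunE addbA addbb.
have e : fib S a0 = sig @^-1: fib S a.
  apply/setP => u; rewrite !inE.
  move: aS; rewrite inE => /forallP ha.
  apply/eqP/eqP => /ffunP hu; apply/ffunP => x; move: (hu x); rewrite !ffunE.
    case: (boolP (x \in S)) => xS /=; first by move=> ->; rewrite addbF.
    by move/implyP: (ha x) => /(_ xS) /negbTE ->.
  case: (boolP (x \in S)) => xS /=; last by [].
  by case: (a x); case: (u x).
by rewrite e card_preimset //; apply: inv_inj.
Qed.

Definition cc S := #|fib S a0|.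

Lemma cc_gt0 S : (0 < cc S)%N.
Proof.
apply/card_gt0P; exists a0; rewrite inE restr_id //.
by rewrite inE; apply/forallP => x; rewrite ffunE implybT.
Qed.

Lemma sum_restr S (F : asgT -> R) :
  \sum_(u : asgT) F (restr S u) = (\sum_(a in asg S) F a) *+ cc S.
Proof.
rewrite (partition_big (restr S) (mem (asg S))) /=; last by move=> u _; exact: restr_asg.
rewrite -sumrMnl; apply: eq_bigr => a aS.
rewrite (eq_bigr (fun _ => F a)); last by move=> u /eqP ->.
rewrite sumr_const /cc -(fib_card aS); congr (_ *+ _).
by apply: eq_card => u; rewrite inE.
Qed.

Definition PP S (f : bfun) (u : asgT) : R := EE (fun w => (f (merge S u w))%:R).

Lemma Hk_EE k f S : Hk k f S = EE (fun u => k (PP S f u)).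
Proof.
have e u : PP S f u = PP S f (restr S u).
  rewrite /PP; apply: EE_ext => w; congr (_ _)%:R; congr f.
  by apply/ffunP => x; rewrite !ffunE; case: (x \in S).
rewrite (EE_ext (fun u => congr1 k (e u))) /EE (sum_restr S (fun a => k (PP S f a))).
have ec : (NN%:R : R) = #|asg S|%:R *+ cc S.
  have := sum_restr S (fun _ => 1); rewrite !sumr_const.
  have -> : #|[pred _ : asgT | true]| = NN by apply: eq_card.
  by move=> ->.
rewrite ec /Hk.
move: (\sum_(a in asg S) _) => s.
have cn : ((cc S)%:R : R) != 0 by rewrite pnatr_eq0 -lt0n cc_gt0.
have -> : s *+ cc S = s * (cc S)%:R by rewrite mulr_natr.
have -> : (#|asg S|%:R : R) *+ cc S = #|asg S|%:R * (cc S)%:R by rewrite mulr_natr.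
by rewrite invfM mulrACA divff // mulr1.
Qed.


Definition AA (f : bfun) S x c (u : asgT) : R :=
  EE (fun w => (f (upd (merge S u w) x c))%:R).

Lemma PP_U S f x u : PP (S :|: [set x]) f u = AA f S x (u x) u.
Proof.
apply: EE_ext => w; congr (f _)%:R; apply/ffunP => y; rewrite !ffunE in_setU in_set1.
by case: (eqVneq y x) => [->|]; rewrite ?orbT ?orbF.
Qed.

Lemma PP_D S f x u :
  PP (S :\ x) f u = (AA f S x true u + AA f S x false u) / 2.
Proof.
rewrite /PP (EE_upd _ x); congr ((_ + _) / _); apply: EE_ext => w;
  congr (f _)%:R; apply/ffunP => y; rewrite !ffunE in_setD1;
  by case: (eqVneq y x).
Qed.

Lemma AA_upd f S x c c' u : AA f S x c (upd u x c') = AA f S x c u.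
Proof.
apply: EE_ext => w; congr (f _)%:R; apply/ffunP => y; rewrite !ffunE.
  by case: (eqVneq y x).
Qed.

Lemma deriv_Hk k f S x :
  Defs.deriv x (Hk k f) S =
  EE (fun u => (k (AA f S x true u) + k (AA f S x false u)) / 2
               - k ((AA f S x true u + AA f S x false u) / 2)).
Proof.
rewrite /Defs.deriv !Hk_EE (EE_ext (fun u => congr1 k (PP_U S f x u))).
rewrite (EE_ext (fun u => congr1 k (PP_D S f x u))).
rewrite (EE_upd (fun u => k (AA f S x (u x) u)) x) EE_sub; congr (_ - _).
rewrite -EE_add -EE_scalr; apply: EE_ext => u.
by rewrite !upd_at !AA_upd.
Qed.


Lemma nat01 (b : bool) : 0 <= (b%:R : R) <= 1.
Proof. by case: b; rewrite /= ?lexx ?ler01 ?ler0n. Qed.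

Lemma PP_01 S f u : in01 (PP S f u).
Proof. by apply: EE_01 => w; exact: nat01. Qed.

Lemma AA_01 f S x c u : in01 (AA f S x c u).
Proof. by apply: EE_01 => w; exact: nat01. Qed.

Lemma in01_mid (a b : R) : in01 a -> in01 b -> in01 ((a + b) / 2).
Proof. rewrite /in01 => /andP[? ?] /andP[? ?]; apply/andP; split; lra. Qed.

Section Part1.
Variable k : R -> R.
Hypothesis hk : constancy k.

Lemma k_01 a : in01 a -> 0 <= k a <= 1.
Proof. by case: hk => h _ a01; apply: h. Qed.

Lemma k_sym a : in01 a -> k a = k (1 - a).
Proof. by case: hk => _ [_ [_ [h _]]]; apply: h. Qed.

Lemma k_conv a b : in01 a -> in01 b -> k ((a + b) / 2) <= (k a + k b) / 2.
Proof.
case: hk => _ [h _] a01 b01.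
have h12 : in01 (1 / 2 : R). rewrite /in01. apply/andP. split. lra. lra.
have := h a b (1/2) a01 b01 h12.
have -> : 1 / 2 * a + (1 - 1 / 2) * b = (a + b) / 2 by field.
have -> : 1 / 2 * k a + (1 - 1 / 2) * k b = (k a + k b) / 2 by field.
done.
Qed.

Lemma k0 : k 0 = 1. Proof. by case: hk => _ [_ [h _]]. Qed.
Lemma k1 : k 1 = 1.
Proof.
have h : in01 (0 : R) by rewrite /in01 lexx ler01.
by have := k0; rewrite (k_sym h) subr0.
Qed.
Lemma khalf : k (1 / 2) = 0. Proof. by case: hk => _ [_ [_ [_ h]]]. Qed.

Lemma Bound_Hk : Bound (Hk (X:=X) k).
Proof.
move=> f x S; rewrite deriv_Hk; apply: EE_01 => u.
have a1 := AA_01 f S x true u; have a0 := AA_01 f S x false u.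
have m := in01_mid a1 a0.
have c := k_conv a1 a0.
case/andP: (k_01 a1) => ? ?; case/andP: (k_01 a0) => ? ?; case/andP: (k_01 m) => ? ?.
apply/andP; split; lra.
Qed.

Lemma Dum_Hk : Dum (Hk (X:=X) k).
Proof.
move=> f x nd S; rewrite deriv_Hk -(EE_cst 0); apply: EE_ext => u.
have -> : AA f S x true u = AA f S x false u.
  by apply: EE_ext => w; rewrite !(nodep_upd nd).
have h2 : forall a : R, (a + a) / 2 = a by move=> a; field.
rewrite !h2.
by rewrite subrr.
Qed.

Lemma Dic_Hk : Dic (Hk (X:=X) k).
Proof.
have e0 : (1 + 0) / 2 = 1 / 2 :> R by rewrite addr0.
have e1 : (0 + 1) / 2 = 1 / 2 :> R by rewrite add0r.
have e2 : (1 + 1) / 2 = 1 :> R by field.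
move=> x S; split; rewrite deriv_Hk -(EE_cst 1); apply: EE_ext => u.
  rewrite /AA.
  rewrite (EE_ext (G := fun _ => 1) (fun w => congr1 (fun b : bool => b%:R) (upd_at _ x true))).
  rewrite (EE_ext (G := fun _ => 0) (fun w => congr1 (fun b : bool => b%:R) (upd_at _ x false))).
  by rewrite !EE_cst e0 khalf k1 k0 e2 subr0.
rewrite /AA.
rewrite (EE_ext (G := fun _ => 0) (fun w => congr1 (fun b : bool => (~~ b)%:R) (upd_at _ x true))).
rewrite (EE_ext (G := fun _ => 1) (fun w => congr1 (fun b : bool => (~~ b)%:R) (upd_at _ x false))).
by rewrite !EE_cst e1 khalf k1 k0 e2 subr0.
Qed.

Lemma unbiased_Hk : unbiased (Hk (X:=X) k).
Proof.
move=> g S; rewrite !Hk_EE; apply: EE_ext => u.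
have -> : PP S (negf g) u = 1 - PP S g u.
  have -> : (1:R) - PP S g u = EE (fun w => 1 - (g (merge S u w))%:R)
    by rewrite EE_sub EE_cst.
  apply: EE_ext => w.
  by rewrite /negf; case: (g _); rewrite /= ?subr0 ?subrr.
by rewrite -k_sym // PP_01.
Qed.

End Part1.

Lemma perm_asg_inj (t : {perm X}) : injective (perm_asg t).
Proof.
move=> u v /ffunP e; apply/ffunP => y; have := e (t y).
by rewrite !ffunE permK.
Qed.

Lemma Type_Hk (k : R -> R) : TypeCG (Hk (X:=X) k).
Proof.
split.
  move=> s f S; rewrite !Hk_EE.
  rewrite -[RHS](EE_inj _ (@perm_asg_inj s)).
  apply: EE_ext => u; congr k.
  rewrite /PP -(EE_inj _ (@perm_asg_inj (s^-1)%g)); apply: EE_ext => w.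
  congr (f _)%:R; apply/ffunP => y; rewrite /perm_asg !ffunE invgK.
  rewrite (mem_imset _ _ perm_inj) permK.
  by case: (y \in S).
move=> y f S; rewrite !Hk_EE.
rewrite -[LHS](EE_inj _ (@flip_inj y)).
apply: EE_ext => u; congr k.
rewrite /PP -(EE_inj _ (@flip_inj y)); apply: EE_ext => w.
congr (f _)%:R; apply/ffunP => z; rewrite /flip_bf !ffunE.
by case: (z \in S); case: eqP.
Qed.


Definition DD (f : bfun) S x (u : asgT) : R :=
  EE (fun w => (f (upd (merge S u w) x true))%:R - (f (upd (merge S u w) x false))%:R).

Lemma deriv_Hq f S x :
  Defs.deriv x (Hk (X:=X) (@kquad R) f) S = EE (fun u => (DD f S x u) ^+ 2).
Proof.
rewrite deriv_Hk; apply: EE_ext => u.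
rewrite /DD EE_sub -/(AA f S x true u) -/(AA f S x false u).
move: (AA f S x true u) (AA f S x false u) => a b.
by rewrite /kquad; field.
Qed.

Definition MM (l : bfun) z S (u : asgT) : R :=
  EE (fun w => (l (upd (merge S u w) z true))%:R - (l (upd (merge S u w) z false))%:R).

Lemma nodep_upd2 (l : bfun) x z : ~~ dep l x ->
  forall v c b, l (upd (upd v x c) z b) = l (upd v z b).
Proof.
move=> nd v c b; case: (eqVneq x z) => [->|ne]; first by rewrite upd_upd.
by rewrite upd_comm // nodep_upd.
Qed.

Lemma agree_um (P : pred X) S (u u' w w' : asgT) x c :
  (forall y, P y -> u y = u' y) -> (forall y, P y -> w y = w' y) ->
  forall y, P y -> upd (merge S u w) x c y = upd (merge S u' w') x c y.
Proof.
move=> hu hw y py; rewrite !ffunE; case: (y == x) => //.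
by case: (y \in S); auto.
Qed.

Section Chain.
Variables (f g l : bfun) (z : X).
Hypothesis hm : modular_wit f g l z.

Let D := [set y | dep g y].

Lemma disj y : dep l y -> y \notin D.
Proof.
case: hm => _ [hd _] dl; rewrite inE; apply/negP => dg.
by have := hd y; rewrite dl dg.
Qed.

Lemma delta_f v x : dep g x ->
  (f (upd v x true))%:R - (f (upd v x false))%:R =
  ((g (upd v x true))%:R - (g (upd v x false))%:R) *
  ((l (upd v z true))%:R - (l (upd v z false))%:R) :> R.
Proof.
move=> dgx; case: hm => _ [hd hf].
have ndl : ~~ dep l x by apply/negP => dl; have := hd x; rewrite dl dgx.
rewrite !hf /bsubst /cof !(fun v c b => @nodep_upd2 l x z ndl v c b).
case: (g (upd v x true)); case: (g (upd v x false));
  case: (l (upd v z true)); case: (l (upd v z false)); rewrite /=; lra.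
Qed.

Lemma DD_f S x u : dep g x -> DD f S x u = DD g S x u * MM l z S u.
Proof.
move=> dgx; rewrite /DD /MM (EE_ext (fun w => delta_f (merge S u w) dgx)).
apply: (EE_indep (D := D)) => w w' hw.
  congr (_ - _); congr ((nat_of_bool _)%:R); apply: dep_only => y dy;
    apply: (@agree_um (fun y => y \in D)) => [y' _ //|y' /hw //|]; by rewrite inE.
congr (_ - _); congr ((nat_of_bool _)%:R); apply: dep_only => y dy;
  apply: (@agree_um (fun y => y \notin D)) => [y' _ //|y' /hw //|]; exact: disj.
Qed.

Lemma chain_formula S x : dep g x ->
  Defs.deriv x (Hk (X:=X) (@kquad R) f) S =
  Defs.deriv x (Hk (X:=X) (@kquad R) g) S * EE (fun u => (MM l z S u) ^+ 2).
Proof.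
move=> dgx; rewrite !deriv_Hq.
rewrite (EE_ext (fun u => congr1 (fun a => a ^+ 2) (DD_f S u dgx))).
under EE_ext => u do rewrite exprMn.
apply: (EE_indep (D := D)) => u u' hu.
  congr (_ ^+ 2); apply: EE_ext => w.
  congr (_ - _); congr ((nat_of_bool _)%:R); apply: dep_only => y dy;
    apply: (@agree_um (fun y => y \in D)) => [y' /hu //|y' _ //|]; by rewrite inE.
congr (_ ^+ 2); apply: EE_ext => w.
congr (_ - _); congr ((nat_of_bool _)%:R); apply: dep_only => y dy;
  apply: (@agree_um (fun y => y \notin D)) => [y' /hu //|y' _ //|]; exact: disj.
Qed.

Lemma key_K xg : ~~ dep f xg -> forall v c b,
  l (upd (upd v xg c) z b) = l (upd v z b).
Proof.
move=> ndf v c b.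
case: (boolP (dep g xg)) => [dg|ndg].
  have ndl : ~~ dep l xg.
    by apply/negP => dl; case: hm => _ [hd _]; have := hd xg; rewrite dl dg.
  exact: nodep_upd2.
have [vb gvb] : exists vb, g vb = b.
  case: (pickP (fun v => g v == b)) => [vb /eqP gvb | none]; first by exists vb.
  case: hm => nc _; exfalso; apply: nc; exists (~~ b) => u.
  by move: (none u); clear none; case: (g u); case: b.
pose w := merge D vb v.
have E c' : l (upd (upd v xg c') z b) = f w.
  case: hm => _ [_ hf].
  rewrite -(nodep_upd ndf w c') hf /bsubst /cof.
  have -> : g (upd w xg c') = b.
    rewrite (nodep_upd ndg) -gvb; apply: dep_only => y dy.
    by rewrite ffunE inE dy.
  have lw b' : l (upd (upd w xg c') z b') = l (upd (upd v xg c') z b').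
    apply: dep_only => y dy; rewrite !ffunE.
    case: (y == z) => //; case: (y == xg) => //.
    by rewrite (negbTE (disj dy)).
  by rewrite !lw; move: gvb; case: b => _ /=; rewrite ?orbF.
by rewrite (E c) -(E (v xg)) upd_id.
Qed.

End Chain.

Lemma chain_Hq : chain_rule (Hk (X:=X) (@kquad R)).
Proof.
move=> f g l z hm x dgx xg ndf S.
rewrite (chain_formula hm S dgx); congr (_ * _).
rewrite deriv_Hq; apply: EE_ext => u; congr (_ ^+ 2).
apply: EE_ext => w; rewrite /bsubst /cof /varf !upd_at /=.
by rewrite orbF !(key_K hm ndf).
Qed.

Lemma ModEC_Hq : ModEC (Hk (X:=X) (@kquad R)).
Proof.
move=> f h g lf zf lh zh [hf _] [hh mh] h1 h0 x dgx S.
rewrite (chain_formula hf S dgx) (chain_formula hh S dgx).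
have g0 : 0 <= Defs.deriv x (Hk (X:=X) (@kquad R) g) S.
  rewrite deriv_Hq -[X in X <= _](EE_cst 0); apply: EE_le => u; exact: sqr_ge0.
rewrite ler_wpM2l //; apply: EE_le => u.
have hmm : 0 <= MM lh zh S u <= MM lf zf S u.
  apply/andP; split.
    rewrite -[X in X <= _](EE_cst 0); apply: EE_le => w.
    move: (mh (merge S u w)); rewrite /cof.
    case: (lh (upd _ zh true)); case: (lh (upd _ zh false)) => //= _; lra.
  apply: EE_le => w.
  move: (mh (merge S u w)) (h1 (merge S u w)) (h0 (merge S u w)); rewrite /cof.
  case: (lh (upd _ zh true)); case: (lh (upd _ zh false));
    case: (lf (upd _ zf true)); case: (lf (upd _ zf false)) => //= _ _ _; lra.
case/andP: hmm => ha hb; nra.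
Qed.

End Work.

Theorem mainTheorem16 (R : realFieldType) (X : finType) (k : R -> R) :
  constancy k ->
  (unbiased (Hk (X:=X) k) /\ Bound (Hk (X:=X) k) /\ Dic (Hk (X:=X) k) /\
   Dum (Hk (X:=X) k) /\ TypeCG (Hk (X:=X) k)) /\
  (chain_rule (Hk (X:=X) (@kquad R)) /\ ModEC (Hk (X:=X) (@kquad R))).
Proof.
move=> hk; split.
  split; first exact: unbiased_Hk.
  split; first exact: Bound_Hk.
  split; first exact: Dic_Hk.
  split; first exact: Dum_Hk.
  exact: Type_Hk.
split; [exact: chain_Hq | exact: ModEC_Hq].
Qed.
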